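(* Let $d\ge 1$, let $\mathcal{A}\in\mathbb{R}^{n_1\times n_2\times\cdots\times n_d}$, let $p\in\{1,\dots,d\}$, and let $R$ be the number of nonzero $p$-fibers of $\mathcal{A}$. Then $\mathcal{A}$ is equal to a tensor train with TT ranks $r_0=r_d=1$ and $r_k=R$ for $1\le k\le d-1$; that is, there exist cores $\mathcal{G}^{(k)}\in\mathbb{R}^{r_{k-1}\times n_k\times r_k}$, $k=1,\dots,d$, with $$\mathcal{A}(i_1,\dots,i_d)=\mathcal{G}^{(1)}(:,i_1,:)\,\mathcal{G}^{(2)}(:,i_2,:)\cdots\mathcal{G}^{(d)}(:,i_d,:)\quad\text{for all }(i_1,\dots,i_d),$$ such that every core $\mathcal{G}^{(k)}$ with $k\neq p$ has all its entries in $\{0,1\}$ (i.e. $\mathcal{G}^{(k)}\in\{0,1\}^{r_{k-1}\times n_k\times r_k}$), while $\mathcal{G}^{(p)}\in\mathbb{R}^{r_{k-1}\times n_p\times r_p}$ is real-valued.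
   Context: For $p\in\{1,\dots,d\}$, a $p$-fiber of $\mathcal{A}$ is a vector obtained by fixing all indices except the $p$-th: for a fixed multi-index $(i_1,\dots,i_{p-1},i_{p+1},\dots,i_d)$, the vector $\mathcal{A}(i_1,\dots,i_{p-1},:,i_{p+1},\dots,i_d)\in\mathbb{R}^{n_p}$. A $p$-fiber is nonzero if it is not the zero vector. A tensor train (TT) with cores $\mathcal{G}^{(k)}\in\mathbb{R}^{r_{k-1}\times n_k\times r_k}$, $r_0=r_d=1$, represents the tensor whose entries are the products of the matrices $\mathcal{G}^{(k)}(:,i_k,:)\in\mathbb{R}^{r_{k-1}\times r_k}$ as displayed; the $r_k$ are called TT ranks. *)

(* Defs.v *)
From HB Require Import structures.
From mathcomp Require Import all_boot all_order all_algebra.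
From mathcomp Require Import reals.
Set Implicit Arguments. Unset Strict Implicit. Unset Printing Implicit Defensive.
Import Order.TTheory GRing.Theory Num.Theory.
Local Open Scope ring_scope.

Section TT.
Variable (R : realType) (d : nat) (n : 'I_d -> nat).

Definition mindex := {dffun forall k : 'I_d, 'I_(n k)}.

Definition tensor := mindex -> R.

(* The position of the p-fiber through i: all coordinates except the p-th. *)
Definition fiber_pos (p : 'I_d) (i : mindex)
  : {dffun forall k : 'I_d, option 'I_(n k)} :=
  [ffun k => if k == p then None else Some (i k)].

Definition fiber_nonzero (A : tensor) (p : 'I_d)
  (q : {dffun forall k : 'I_d, option 'I_(n k)}) : bool :=
  [exists i : mindex, (fiber_pos p i == q) && (A i != 0)].

Definition nnz_fibers (A : tensor) (p : 'I_d) : nat :=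
  #|[set q | fiber_nonzero A p q]|.

Definition tt_rank (Rk j : nat) : nat := if (j == 0)%N || (j == d) then 1%N else Rk.

Lemma tt_rank_d_gt0 Rk : (0 < tt_rank Rk d)%N.
Proof. by rewrite /tt_rank eqxx orbT. Qed.

Section Eval.
Variable (Rk : nat).
Variable (G : forall k : 'I_d, 'I_(n k) -> 'M[R]_(tt_rank Rk k, tt_rank Rk k.+1)).
Variable (i : mindex).

Fixpoint tt_left (m : nat) : (m <= d)%N -> 'M[R]_(1, tt_rank Rk m) :=
  match m return (m <= d)%N -> 'M[R]_(1, tt_rank Rk m) with
  | 0 => fun _ => (1%:M : 'M[R]_1)
  | m'.+1 => fun H => @tt_left m' (ltnW H) *m @G (Ordinal H) (i (Ordinal H))
  end.

Definition tt_eval : R :=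
  @tt_left d (leqnn d) ord0 (Ordinal (tt_rank_d_gt0 Rk)).
End Eval.
End TT.

(* Main.v *)
Require Import Defs.
From HB Require Import structures.
From mathcomp Require Import all_boot all_order all_algebra.
From mathcomp Require Import reals.
Import Order.TTheory GRing.Theory Num.Theory.
Local Open Scope ring_scope.
Set Implicit Arguments. Unset Strict Implicit.

Section Pf.
Variables (R : realType) (d : nat) (n : 'I_d -> nat) (A : tensor R n) (p : 'I_d).

Definition fpos := {dffun forall k : 'I_d, option 'I_(n k)}.
Definition Qs : {set fpos} := [set q | fiber_nonzero A p q].
Definition qN : fpos := [ffun k => None].
Definition fib (x : nat) : fpos := nth qN (enum Qs) x.
Definition V (q : fpos) (k : 'I_d) (j : 'I_(n k)) : R :=
  \sum_(i' : mindex n | (fiber_pos p i' == q) && (val (i' k) == val j)) A i'.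
Definition hv (k : 'I_d) (j : 'I_(n k)) (q : fpos) : R :=
  if k == p then V q j else (q k == Some j)%:R.
Definition g (k : 'I_d) (j : 'I_(n k)) (a b : nat) : R :=
  (((val k == 0%N) || (k.+1 == d) || (a == b))%:R) *
  hv j (if k.+1 == d then fib a else fib b).
Definition Gc (k : 'I_d) (j : 'I_(n k)) :
  'M[R]_(tt_rank d (nnz_fibers A p) k, tt_rank d (nnz_fibers A p) k.+1) :=
  \matrix_(a, b) g j a b.

Lemma Gc01 k : k != p -> forall (j : 'I_(n k)) a b, Gc j a b = 0 \/ Gc j a b = 1.
Proof.
move=> kp j a b; rewrite mxE /g /hv (negbTE kp).
by case: (_ || _); case: (_ == _); rewrite ?mulr1 ?mulr0 ?mul0r; auto.
Qed.

Lemma fib_None x : (x < #|Qs|)%N -> fib x p = None.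
Proof.
move=> hx; have: fib x \in Qs by rewrite -mem_enum /fib mem_nth // -cardE.
rewrite inE => /existsP [i' /andP [/eqP <- _]].
by rewrite /fiber_pos ffunE eqxx.
Qed.

Variable i : mindex n.

Lemma V_fp : V (fiber_pos p i) (i p) = A i.
Proof.
rewrite /V (eq_bigl (fun i' => i' == i)) ?big_pred1_eq //.
move=> i'; apply/andP/eqP => [[/eqP H /eqP H2]|->]; last by [].
apply/ffunP => k; case: (eqVneq k p) => [->|kp]; first by apply: val_inj.
move/ffunP: H => /(_ k); rewrite /fiber_pos !ffunE (negbTE kp).
by case.
Qed.

Lemma prod_h (q : fpos) : q p = None ->
  \prod_(k : 'I_d) hv (i k) q = (q == fiber_pos p i)%:R * A i.
Proof.
move=> qp; rewrite (bigD1 p) //= {1}/hv eqxx.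
case: (boolP [forall k, (k != p) ==> (q k == Some (i k))]) => [/forallP H|].
  have -> : q = fiber_pos p i.
    apply/ffunP => k; rewrite /fiber_pos ffunE; case: ifP => [/eqP -> //|/negbT kp].
    by apply/eqP; move: (H k); rewrite kp.
  rewrite V_fp eqxx mul1r big1 ?mulr1 // => k kp.
  by rewrite /hv (negbTE kp) /fiber_pos ffunE (negbTE kp) eqxx.
rewrite negb_forall => /existsP [k]; rewrite negb_imply => /andP [kp qk].
have -> : (q == fiber_pos p i) = false.
  apply/negbTE; apply: contra qk => /eqP ->.
  by rewrite /fiber_pos ffunE (negbTE kp).
rewrite (bigD1 k) //= /hv (negbTE kp) (negbTE qk).
by rewrite !mul0r mulr0.
Qed.

Let Rn := nnz_fibers A p.
Let GG := fun k : 'I_d => @Gc k.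
Definition P m x := \prod_(k : 'I_d | (k < m)%N) hv (i k) (fib x).

Lemma lsum N (F : nat -> R) b : (b < N)%N -> \sum_(a < N) F a * (nat_of_ord a == b)%:R = F b.
Proof.
move=> hb; rewrite (bigD1 (Ordinal hb)) //= eqxx mulr1 big1 ?addr0 // => a ha.
have -> : (nat_of_ord a == b) = false.
  by apply/negbTE; apply: contra ha => /eqP h; apply/eqP/val_inj.
by rewrite mulr0.
Qed.

Lemma Pstep m (H : (m < d)%N) x : P m.+1 x = P m x * hv (i (Ordinal H)) (fib x).
Proof.
rewrite /P (bigD1 (Ordinal H)) //= mulrC; congr (_ * _).
apply: eq_bigl => k; rewrite ltnS; apply/andP/idP => [[a b]|a].
  by rewrite ltn_neqAle a andbT; apply: contra b => /eqP h; apply/eqP/val_inj.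
split; first by apply: ltnW.
by apply/eqP => h; move: a; rewrite h /= ltnn.
Qed.

Lemma mid m (H : (m <= d)%N) : (0 < m)%N -> (m < d)%N ->
  forall b, tt_left GG i H 0 b = P m b.
Proof.
elim: m H => [//|m IH] H _ md b /=.
rewrite mxE.
case: m IH H md b => [|m] IH H md b.
  rewrite big_ord1 !mxE mul1r (Pstep H) /g /=.
  have -> : (1 == d) = false by apply/negbTE; rewrite neq_ltn md.
  by rewrite /P big_pred0 ?mul1r // => k; rewrite ltn0.
have md1 : (m.+1 < d)%N by apply: ltnW.
have hmd : (m.+2 == d) = false by apply/negbTE; rewrite neq_ltn md.
under eq_bigr => j _ do rewrite (IH (ltnW H) isT md1) /GG mxE /g /= hmd.
under eq_bigr => j _ do rewrite /= mulrCA mulrC.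
rewrite (lsum (fun x => P m.+1 x * hv (i (Ordinal H)) (fib b))) ?(Pstep H) //.
have := ltn_ord b; move: (nat_of_ord b) => x; rewrite /tt_rank /= hmd.
by rewrite (ltn_eqF md1).
Qed.

Lemma Pd x : P d x = \prod_(k : 'I_d) hv (i k) (fib x).
Proof. by apply: eq_bigl => k; rewrite ltn_ord. Qed.

Lemma fp_p : fiber_pos p i p = None.
Proof. by rewrite /fiber_pos ffunE eqxx. Qed.

Lemma tt_left_S m (H : (m.+1 <= d)%N) :
  tt_left GG i H = tt_left GG i (ltnW H) *m GG (i (Ordinal H)).
Proof. by []. Qed.

Lemma fib_pN x : fib x p = None.
Proof.
case: (ltnP x #|Qs|) => hx; first exact: fib_None.
by rewrite /fib nth_default ?ffunE // -cardE.
Qed.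

Lemma final m (H : (m <= d)%N) : m = d -> (0 < m)%N ->
  forall a b, tt_left GG i H a b = A i.
Proof.
case: m H => [//|m] H md _.
case: m H md => [|m] H md a b; rewrite tt_left_S mxE.
  have e1 : (1%N == d) by rewrite -md.
  rewrite big_ord1 !mxE /g /= e1 /= mul1r.
  have -> : a = ord0 by apply: ord_inj; case: a => [[]].
  rewrite eqxx mul1r.
  have -> : hv (i (Ordinal H)) (fib 0) = P 1 0.
    by rewrite (Pstep H) /P big_pred0 ?mul1r // => k; rewrite ltn0.
  have -> : P 1 0 = P d 0 by rewrite md.
  rewrite Pd prod_h.
    have -> : fib 0 = fiber_pos p i; last by rewrite eqxx mul1r.
    apply/ffunP => k; have -> : k = p.
      apply: val_inj; have hk : (val k < 1)%N by rewrite md ltn_ord.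
      have hp : (val p < 1)%N by rewrite md ltn_ord.
      rewrite ltnS leqn0 in hk; rewrite ltnS leqn0 in hp.
      by rewrite (eqP hk) (eqP hp).
    by rewrite fib_pN fp_p.
  exact: fib_pN.
have -> : a = ord0 by apply: ord_inj; case: a => [[]].
have e2 : (m.+2 == d) by rewrite md.
under eq_bigr => j _ do rewrite (mid (ltnW H) isT H) /GG mxE /g /= e2 /= mul1r -(Pstep H).
have -> : P m.+2 = P d by rewrite md.
rewrite -(big_mkord xpredT (P d)).
have -> : tt_rank d (nnz_fibers A p) m.+1 = size (enum Qs).
  by rewrite /tt_rank /= (ltn_eqF H) -cardE.
under eq_bigr => j _ do rewrite Pd prod_h ?fib_pN //.
rewrite /fib -(big_nth qN xpredT (fun q => (q == fiber_pos p i)%:R * A i)).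
rewrite big_enum /=.
case: (boolP (fiber_pos p i \in Qs)) => h.
  rewrite (bigD1 _ h) /= eqxx mul1r big1 ?addr0 // => q /andP[_ hq].
  by rewrite (negbTE hq) mul0r.
have Ai : A i = 0.
  move: h; rewrite inE /fiber_nonzero negb_exists => /forallP /(_ i).
  by rewrite eqxx /= negbK => /eqP.
rewrite Ai big1 // => q _; by rewrite mulr0.
Qed.
End Pf.

Theorem theorem1 (R : realType) (d : nat) (n : 'I_d -> nat)
    (A : tensor R n) (p : 'I_d) :
  (1 <= d)%N ->
  exists G : forall k : 'I_d,
      'I_(n k) -> 'M[R]_(tt_rank d (nnz_fibers A p) k,
                         tt_rank d (nnz_fibers A p) k.+1),
    (forall i : mindex n, A i = tt_eval G i) /\
    (forall k : 'I_d, k != p ->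
       forall (j : 'I_(n k)) a b, G k j a b = 0 \/ G k j a b = 1).
Proof.
move=> hd; exists (fun k => @Gc R d n A p k); split; last exact: Gc01.
move=> i; rewrite /tt_eval.
by rewrite (@final R d n A p i d (leqnn d) erefl hd).
Qed.
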